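(* Let $\mathbb{D}\subset\mathbb{C}$ be the unit disc and $\mathbb{B}^n\subset\mathbb{R}^n$, $n\ge 3$, the open unit ball. Assume $f:\mathbb{D}\to\mathbb{B}^n$ is a conformal minimal immersion. Then for every $a\in\mathbb{D}$, $$\|f(a)\|\ \le\ \frac{|a|+\|f(0)\|}{1+|a|\,\|f(0)\|}.$$
   Context: A conformal minimal immersion $f=f(x,y)$, $z=x+iy$, is a harmonic immersion satisfying $\langle f_x,f_x\rangle=\langle f_y,f_y\rangle$ and $\langle f_x,f_y\rangle=0$. $\|\cdot\|$ is the Euclidean norm. *)

(* Defs.v *)
From Stdlib Require Import Reals Lra List.
From Coquelicot Require Import Coquelicot.
Import ListNotations.
Open Scope R_scope.

(* A map f : D -> R^n is represented by its components f i : R -> R -> R,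
   i = 0..n-1, as functions of (x, y), z = x + i y. *)

Definition dotn (n : nat) (u v : nat -> R) : R :=
  fold_right Rplus 0 (map (fun i => u i * v i) (seq 0 n)).
Definition normn (n : nat) (u : nat -> R) : R := sqrt (dotn n u u).

Definition in_disc (x y : R) : Prop := x ^ 2 + y ^ 2 < 1.
Definition in_ball (n : nat) (u : nat -> R) : Prop := normn n u < 1.

Definition dx (g : R -> R -> R) (x y : R) : R := Derive (fun t => g t y) x.
Definition dy (g : R -> R -> R) (x y : R) : R := Derive (fun t => g x t) y.

Definition C2_at (g : R -> R -> R) (x y : R) : Prop :=
  (exists e : posreal, forall u v, Rabs (u - x) < e -> Rabs (v - y) < e ->
     ex_derive (fun t => g t v) u /\ ex_derive (fun t => g u t) v /\
     ex_derive (fun t => dx g t v) u /\ ex_derive (fun t => dx g u t) v /\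
     ex_derive (fun t => dy g t v) u /\ ex_derive (fun t => dy g u t) v) /\
  continuity_2d_pt g x y /\
  continuity_2d_pt (dx g) x y /\ continuity_2d_pt (dy g) x y /\
  continuity_2d_pt (dx (dx g)) x y /\ continuity_2d_pt (dy (dx g)) x y /\
  continuity_2d_pt (dx (dy g)) x y /\ continuity_2d_pt (dy (dy g)) x y.

Definition harmonic_on_disc (n : nat) (f : nat -> R -> R -> R) : Prop :=
  forall i, (i < n)%nat -> forall x y, in_disc x y ->
    C2_at (f i) x y /\ dx (dx (f i)) x y + dy (dy (f i)) x y = 0.

Definition fx (f : nat -> R -> R -> R) (x y : R) : nat -> R :=
  fun i => dx (f i) x y.
Definition fy (f : nat -> R -> R -> R) (x y : R) : nat -> R :=
  fun i => dy (f i) x y.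

Definition immersion_on_disc (n : nat) (f : nat -> R -> R -> R) : Prop :=
  forall x y, in_disc x y -> forall a b : R,
    (forall i, (i < n)%nat -> a * fx f x y i + b * fy f x y i = 0) ->
    a = 0 /\ b = 0.

Definition conformal_minimal_immersion (n : nat) (f : nat -> R -> R -> R) : Prop :=
  harmonic_on_disc n f /\ immersion_on_disc n f /\
  forall x y, in_disc x y ->
    dotn n (fx f x y) (fx f x y) = dotn n (fy f x y) (fy f x y) /\
    dotn n (fx f x y) (fy f x y) = 0.

Definition fpt (f : nat -> R -> R -> R) (x y : R) : nat -> R := fun i => f i x y.

(* Main.v *)
Require Import Defs.
From Stdlib Require Import Reals Lra Lia Psatz List.
From Coquelicot Require Import Coquelicot.
Open Scope R_scope.


Lemma cont2_comp (F g1 g2 : R -> R -> R) x y :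
  continuity_2d_pt F (g1 x y) (g2 x y) -> continuity_2d_pt g1 x y ->
  continuity_2d_pt g2 x y ->
  continuity_2d_pt (fun u v => F (g1 u v) (g2 u v)) x y.
Proof.
  intros HF H1 H2 eps.
  destruct (HF eps) as [d Hd].
  specialize (H1 d); specialize (H2 d).
  generalize (locally_2d_and _ _ _ _ H1 H2).
  apply locally_2d_impl, locally_2d_forall.
  intros u v [Hu Hv]. apply Hd; assumption.
Qed.

Lemma cont2_1d_x (F : R -> R -> R) x y :
  continuity_2d_pt F x y -> continuity_pt (fun t => F t y) x.
Proof.
  intros H eps Heps.
  destruct (H (mkposreal eps Heps)) as [d Hd].
  exists d; split; [apply cond_pos|].
  intros t [_ Ht]. simpl in *. unfold R_dist in *.
  apply Hd; [exact Ht| rewrite Rminus_eq_0, Rabs_R0; apply cond_pos].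
Qed.

Lemma cont2_1d_y (F : R -> R -> R) x y :
  continuity_2d_pt F x y -> continuity_pt (fun t => F x t) y.
Proof.
  intros H eps Heps.
  destruct (H (mkposreal eps Heps)) as [d Hd].
  exists d; split; [apply cond_pos|].
  intros t [_ Ht]. simpl in *. unfold R_dist in *.
  apply Hd; [rewrite Rminus_eq_0, Rabs_R0; apply cond_pos | exact Ht].
Qed.

Lemma cont_of_pt (f : R -> R) x : continuity_pt f x -> continuous f x.
Proof. intro H. apply continuity_pt_filterlim. exact H. Qed.

Lemma diff_partials (f : R -> R -> R) x y :
  locally_2d (fun u v => ex_derive (fun t => f t v) u /\ ex_derive (fun t => f u t) v) x y ->
  continuity_2d_pt (dx f) x y -> continuity_2d_pt (dy f) x y ->
  differentiable_pt_lim f x y (dx f x y) (dy f x y).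
Proof.
  intros [d0 Hd0] Cx Cy eps.
  assert (He2 : 0 < eps / 2) by (destruct eps; simpl; lra).
  destruct (Cx (mkposreal _ He2)) as [d1 Hd1].
  destruct (Cy (mkposreal _ He2)) as [d2 Hd2].
  assert (Hd : 0 < Rmin d0 (Rmin d1 d2)).
  { destruct d0, d1, d2; simpl. repeat apply Rmin_pos; auto. }
  exists (mkposreal _ Hd). intros u v Hu Hv. simpl in Hu, Hv.
  assert (Hu0 : Rabs (u - x) < d0) by (eapply Rlt_le_trans; [exact Hu| apply Rmin_l]).
  assert (Hu1 : Rabs (u - x) < d1) by (eapply Rlt_le_trans; [exact Hu| eapply Rle_trans; [apply Rmin_r|apply Rmin_l]]).
  assert (Hu2 : Rabs (u - x) < d2) by (eapply Rlt_le_trans; [exact Hu| eapply Rle_trans; [apply Rmin_r|apply Rmin_r]]).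
  assert (Hv0 : Rabs (v - y) < d0) by (eapply Rlt_le_trans; [exact Hv| apply Rmin_l]).
  assert (Hv1 : Rabs (v - y) < d1) by (eapply Rlt_le_trans; [exact Hv| eapply Rle_trans; [apply Rmin_r|apply Rmin_l]]).
  assert (Hv2 : Rabs (v - y) < d2) by (eapply Rlt_le_trans; [exact Hv| eapply Rle_trans; [apply Rmin_r|apply Rmin_r]]).
  destruct (MVT_gen (fun t => f t v) x u (fun t => dx f t v)) as [c [Hc Ec]].
  { intros t Ht. apply Derive_correct. apply (Hd0 t v); [|exact Hv0].
    apply Rle_lt_trans with (Rabs (u - x)); [|exact Hu0].
    unfold Rmin, Rmax in Ht; destruct (Rle_dec x u); apply Rabs_le; split;
      try (apply Rabs_le in Ht); unfold Rabs; destruct (Rcase_abs (u - x)); lra. }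
  { intros t Ht. apply derivable_continuous_pt.
    apply ex_derive_Reals_0.
    apply (Hd0 t v); [|exact Hv0].
    apply Rle_lt_trans with (Rabs (u - x)); [|exact Hu0].
    unfold Rmin, Rmax in Ht; destruct (Rle_dec x u); unfold Rabs;
      destruct (Rcase_abs (u - x)); destruct (Rcase_abs (t - x)); lra. }
  destruct (MVT_gen (fun t => f x t) y v (fun t => dy f x t)) as [c' [Hc' Ec']].
  { intros t Ht. apply Derive_correct. apply (Hd0 x t); [rewrite Rminus_eq_0, Rabs_R0; apply cond_pos|].
    apply Rle_lt_trans with (Rabs (v - y)); [|exact Hv0].
    unfold Rmin, Rmax in Ht; destruct (Rle_dec y v); unfold Rabs;
      destruct (Rcase_abs (v - y)); destruct (Rcase_abs (t - y)); lra. }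
  { intros t Ht. apply derivable_continuous_pt.
    apply ex_derive_Reals_0.
    apply (Hd0 x t); [rewrite Rminus_eq_0, Rabs_R0; apply cond_pos|].
    apply Rle_lt_trans with (Rabs (v - y)); [|exact Hv0].
    unfold Rmin, Rmax in Ht; destruct (Rle_dec y v); unfold Rabs;
      destruct (Rcase_abs (v - y)); destruct (Rcase_abs (t - y)); lra. }
  simpl in Ec, Ec'.
  assert (Hcx : Rabs (c - x) <= Rabs (u - x)).
  { unfold Rmin, Rmax in Hc; destruct (Rle_dec x u); unfold Rabs;
      destruct (Rcase_abs (u - x)); destruct (Rcase_abs (c - x)); lra. }
  assert (Hcy : Rabs (c' - y) <= Rabs (v - y)).
  { unfold Rmin, Rmax in Hc'; destruct (Rle_dec y v); unfold Rabs;
      destruct (Rcase_abs (v - y)); destruct (Rcase_abs (c' - y)); lra. }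
  specialize (Hd1 c v ltac:(lra) Hv1).
  specialize (Hd2 x c' ltac:(rewrite Rminus_eq_0, Rabs_R0; apply cond_pos) ltac:(lra)).
  simpl in Hd1, Hd2.
  replace (f u v - f x y - (dx f x y * (u - x) + dy f x y * (v - y)))
    with ((dx f c v - dx f x y) * (u - x) + (dy f x c' - dy f x y) * (v - y))
    by (unfold dx, dy in *; lra).
  eapply Rle_trans; [apply Rabs_triang|]. rewrite !Rabs_mult.
  assert (Rabs (u - x) <= Rmax (Rabs (u - x)) (Rabs (v - y))) by apply Rmax_l.
  assert (Rabs (v - y) <= Rmax (Rabs (u - x)) (Rabs (v - y))) by apply Rmax_r.
  assert (0 <= Rabs (u - x)) by apply Rabs_pos.
  assert (0 <= Rabs (v - y)) by apply Rabs_pos.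
  nra.
Qed.


Lemma diff_plus F G x y a b c d :
  differentiable_pt_lim F x y a b -> differentiable_pt_lim G x y c d ->
  differentiable_pt_lim (fun u v => F u v + G u v) x y (a + c) (b + d).
Proof.
  intros HF HG eps.
  assert (He2 : 0 < eps / 2) by (destruct eps; simpl; lra).
  generalize (locally_2d_and _ _ _ _ (HF (mkposreal _ He2)) (HG (mkposreal _ He2))).
  apply locally_2d_impl, locally_2d_forall. intros u v [H1 H2]. simpl in *.
  replace (F u v + G u v - (F x y + G x y) - ((a + c) * (u - x) + (b + d) * (v - y)))
    with ((F u v - F x y - (a * (u - x) + b * (v - y))) + (G u v - G x y - (c * (u - x) + d * (v - y)))) by ring.
  eapply Rle_trans; [apply Rabs_triang|]. lra.
Qed.

Lemma diff_scal F x y a b k :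
  differentiable_pt_lim F x y a b ->
  differentiable_pt_lim (fun u v => F u v * k) x y (a * k) (b * k).
Proof.
  intros HF eps.
  assert (He2 : 0 < eps / (Rabs k + 1)).
  { destruct eps; simpl. apply Rdiv_lt_0_compat; auto. generalize (Rabs_pos k); lra. }
  generalize (HF (mkposreal _ He2)).
  apply locally_2d_impl, locally_2d_forall. intros u v H1. simpl in *.
  replace (F u v * k - F x y * k - (a * k * (u - x) + b * k * (v - y)))
    with ((F u v - F x y - (a * (u - x) + b * (v - y))) * k) by ring.
  rewrite Rabs_mult.
  assert (0 <= Rmax (Rabs (u - x)) (Rabs (v - y))) by (eapply Rle_trans; [apply Rabs_pos|apply Rmax_l]).
  assert (0 <= Rabs k) by apply Rabs_pos.
  destruct eps as [e He]; simpl in *.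
  assert (Rabs (F u v - F x y - (a * (u - x) + b * (v - y))) * (Rabs k + 1) <= e * Rmax (Rabs (u - x)) (Rabs (v - y))).
  { apply Rmult_le_reg_r with (/ (Rabs k + 1)). apply Rinv_0_lt_compat; lra.
    rewrite Rmult_assoc, Rinv_r by lra. unfold Rdiv in H1. lra. }
  nra.
Qed.

Lemma diff_const c x y : differentiable_pt_lim (fun _ _ => c) x y 0 0.
Proof.
  intros eps. apply locally_2d_forall. intros u v.
  replace (c - c - (0 * (u - x) + 0 * (v - y))) with 0 by ring.
  rewrite Rabs_R0. apply Rmult_le_pos; [left; apply cond_pos|].
  eapply Rle_trans; [apply Rabs_pos|apply Rmax_l].
Qed.


Lemma cont2_pow f n x y : continuity_2d_pt f x y -> continuity_2d_pt (fun u v => f u v ^ n) x y.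
Proof.
  intro H. induction n as [|n IH]; simpl.
  - apply continuity_2d_pt_const.
  - apply continuity_2d_pt_mult; auto.
Qed.
Lemma cont2_cos x y : continuity_2d_pt (fun _ v => cos v) x y.
Proof. apply (continuity_1d_2d_pt_comp cos (fun _ v => v)). apply continuity_cos. apply continuity_2d_pt_id2. Qed.
Lemma cont2_sin x y : continuity_2d_pt (fun _ v => sin v) x y.
Proof. apply (continuity_1d_2d_pt_comp sin (fun _ v => v)). apply continuity_sin. apply continuity_2d_pt_id2. Qed.

Ltac cont2 := repeat first
  [ apply continuity_2d_pt_mult
  | apply continuity_2d_pt_plus
  | apply continuity_2d_pt_minus
  | apply continuity_2d_pt_opp
  | apply cont2_pow
  | apply continuity_2d_pt_const
  | apply continuity_2d_pt_id1
  | apply continuity_2d_pt_id2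
  | apply cont2_cos
  | apply cont2_sin
  | apply continuity_2d_pt_inv ].

Ltac nzt := let H := fresh in intro H;
  repeat (rewrite Rmult_1_r in H);
  repeat (apply Rmult_integral in H; destruct H as [H|H]); nra.

Section Mob.
Variables zx zy : R.
Definition kk := 1 - zx^2 - zy^2.
Definition d1 r t := 1 + zx * (r * cos t) + zy * (r * sin t).
Definition d2 r t := zx * (r * sin t) - zy * (r * cos t).
Definition QQ r t := d1 r t ^ 2 + d2 r t ^ 2.
Definition cm1 a b c d := a * c - b * d.
Definition cm2 a b c d := a * d + b * c.
Definition g1 r t := ((r * cos t + zx) * d1 r t + (r * sin t + zy) * d2 r t) / QQ r t.
Definition g2 r t := ((r * sin t + zy) * d1 r t - (r * cos t + zx) * d2 r t) / QQ r t.
Definition A1 r t := kk * (cos t * (d1 r t ^ 2 - d2 r t ^ 2) + 2 * sin t * d1 r t * d2 r t) / (QQ r t ^ 2).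
Definition A2 r t := kk * (sin t * (d1 r t ^ 2 - d2 r t ^ 2) - 2 * cos t * d1 r t * d2 r t) / (QQ r t ^ 2).
(* conj(D)^3 *)
Definition c3a r t := d1 r t ^ 3 - 3 * d1 r t * d2 r t ^ 2.
Definition c3b r t := - (3 * d1 r t ^ 2 * d2 r t - d2 r t ^ 3).
(* e^{it} (1 - conj z zeta) *)
Definition ua r t := cm1 (cos t) (sin t) (2 - d1 r t) (- d2 r t).
Definition ub r t := cm2 (cos t) (sin t) (2 - d1 r t) (- d2 r t).
Definition E1 r t := kk * cm1 (ua r t) (ub r t) (c3a r t) (c3b r t) / (QQ r t ^ 3).
Definition E2 r t := kk * cm2 (ua r t) (ub r t) (c3a r t) (c3b r t) / (QQ r t ^ 3).

Hypothesis Hz : zx ^ 2 + zy ^ 2 < 1.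

Lemma QQ_pos r t : -1 < r < 1 -> 0 < QQ r t.
Proof.
  intros Hr.
  assert (Hid : QQ r t = (r * cos t + zx) ^ 2 + (r * sin t + zy) ^ 2 + kk * (1 - r ^ 2)).
  { unfold QQ, d1, d2, kk. generalize (sin2_cos2 t). unfold Rsqr. intro H.
    replace (r ^ 2) with (r ^ 2 * (sin t * sin t + cos t * cos t)) by (rewrite H; ring). ring. }
  rewrite Hid. unfold kk. assert (0 < 1 - r ^ 2) by nra.
  assert (0 < (1 - zx^2 - zy^2) * (1 - r^2)) by (apply Rmult_lt_0_compat; lra).
  generalize (pow2_ge_0 (r * cos t + zx)) (pow2_ge_0 (r * sin t + zy)). lra.
Qed.

Lemma g_disc r t : -1 < r < 1 -> g1 r t ^ 2 + g2 r t ^ 2 < 1.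
Proof.
  intros Hr. generalize (QQ_pos r t Hr). intro HQ.
  assert (Hid : QQ r t = (r * cos t + zx) ^ 2 + (r * sin t + zy) ^ 2 + kk * (1 - r ^ 2)).
  { unfold QQ, d1, d2, kk. generalize (sin2_cos2 t). unfold Rsqr. intro H.
    replace (r ^ 2) with (r ^ 2 * (sin t * sin t + cos t * cos t)) by (rewrite H; ring). ring. }
  assert (E : g1 r t ^ 2 + g2 r t ^ 2 = ((r * cos t + zx) ^ 2 + (r * sin t + zy) ^ 2) / QQ r t).
  { unfold g1, g2. unfold QQ in *. field. lra. }
  rewrite E. apply Rmult_lt_reg_r with (QQ r t); [lra|].
  unfold Rdiv. rewrite Rmult_assoc, Rinv_l by lra. rewrite Rmult_1_r, Rmult_1_l.
  unfold kk in Hid. assert (0 < 1 - r ^ 2) by nra.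
  assert (0 < (1 - zx^2 - zy^2) * (1 - r^2)) by (apply Rmult_lt_0_compat; lra). lra.
Qed.

Lemma g1_dr r t : -1 < r < 1 -> is_derive (fun r => g1 r t) r (A1 r t).
Proof. intro Hr. generalize (QQ_pos r t Hr); intro HQ. unfold g1, A1, QQ, d1, d2, kk in *.
  auto_derive; [nzt|]. field. lra. Qed.
Lemma g2_dr r t : -1 < r < 1 -> is_derive (fun r => g2 r t) r (A2 r t).
Proof. intro Hr. generalize (QQ_pos r t Hr); intro HQ. unfold g2, A2, QQ, d1, d2, kk in *.
  auto_derive; [nzt|]. field. lra. Qed.
Lemma g1_dt r t : -1 < r < 1 -> is_derive (fun t => g1 r t) t (- (r * A2 r t)).
Proof. intro Hr. generalize (QQ_pos r t Hr); intro HQ. unfold g1, A2, QQ, d1, d2, kk in *.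
  auto_derive; [nzt|]. field. lra. Qed.
Lemma g2_dt r t : -1 < r < 1 -> is_derive (fun t => g2 r t) t (r * A1 r t).
Proof. intro Hr. generalize (QQ_pos r t Hr); intro HQ. unfold g2, A1, QQ, d1, d2, kk in *.
  auto_derive; [nzt|]. field. lra. Qed.
Lemma v1_dr r t : -1 < r < 1 -> is_derive (fun r => r * A1 r t) r (E1 r t).
Proof. intro Hr. generalize (QQ_pos r t Hr); intro HQ.
  unfold E1, A1, ua, ub, c3a, c3b, cm1, cm2, QQ, d1, d2, kk in *.
  auto_derive; [nzt|]. field. lra. Qed.
Lemma v2_dr r t : -1 < r < 1 -> is_derive (fun r => r * A2 r t) r (E2 r t).
Proof. intro Hr. generalize (QQ_pos r t Hr); intro HQ.
  unfold E2, A2, ua, ub, c3a, c3b, cm1, cm2, QQ, d1, d2, kk in *.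
  auto_derive; [nzt|]. field. lra. Qed.
Lemma v1_dt r t : -1 < r < 1 -> is_derive (fun t => r * A1 r t) t (- (r * E2 r t)).
Proof. intro Hr. generalize (QQ_pos r t Hr); intro HQ.
  unfold E2, A1, ua, ub, c3a, c3b, cm1, cm2, QQ, d1, d2, kk in *.
  auto_derive; [nzt|]. field. lra. Qed.
Lemma v2_dt r t : -1 < r < 1 -> is_derive (fun t => r * A2 r t) t (r * E1 r t).
Proof. intro Hr. generalize (QQ_pos r t Hr); intro HQ.
  unfold E1, A2, ua, ub, c3a, c3b, cm1, cm2, QQ, d1, d2, kk in *.
  auto_derive; [nzt|]. field. lra. Qed.

Lemma QQn_nz r t n : -1 < r < 1 -> QQ r t ^ n <> 0.
Proof. intro Hr. apply pow_nonzero. generalize (QQ_pos r t Hr); lra. Qed.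

Ltac contQ Hr := cont2; try (apply QQn_nz; exact Hr); try (apply Rgt_not_eq; apply QQ_pos; exact Hr).

Lemma cont_g1 r t : -1 < r < 1 -> continuity_2d_pt g1 r t.
Proof. intro Hr. unfold g1, Rdiv. contQ Hr. Qed.
Lemma cont_g2 r t : -1 < r < 1 -> continuity_2d_pt g2 r t.
Proof. intro Hr. unfold g2, Rdiv. contQ Hr. Qed.
Lemma cont_A1 r t : -1 < r < 1 -> continuity_2d_pt A1 r t.
Proof. intro Hr. unfold A1, Rdiv. contQ Hr. Qed.
Lemma cont_A2 r t : -1 < r < 1 -> continuity_2d_pt A2 r t.
Proof. intro Hr. unfold A2, Rdiv. contQ Hr. Qed.
Lemma cont_E1 r t : -1 < r < 1 -> continuity_2d_pt E1 r t.
Proof. intro Hr. unfold E1, Rdiv, cm1, cm2, ua, ub, c3a, c3b. contQ Hr. Qed.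
Lemma cont_E2 r t : -1 < r < 1 -> continuity_2d_pt E2 r t.
Proof. intro Hr. unfold E2, Rdiv, cm1, cm2, ua, ub, c3a, c3b. contQ Hr. Qed.
End Mob.


Lemma isd_mult (f g : R -> R) x df dg : is_derive f x df -> is_derive g x dg ->
  is_derive (fun t => f t * g t) x (df * g x + f x * dg).
Proof. intros H1 H2. apply (is_derive_mult f g x df dg H1 H2). intros; apply Rmult_comm. Qed.
Lemma isd_plus (f g : R -> R) x df dg : is_derive f x df -> is_derive g x dg ->
  is_derive (fun t => f t + g t) x (df + dg).
Proof. intros H1 H2. apply (is_derive_plus f g x df dg H1 H2). Qed.
Lemma isd_eq (f : R -> R) (x l l' : R) : is_derive f x l -> l = l' -> is_derive f x l'.
Proof. intros H ->; exact H. Qed.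

Definition Int (F : R -> R) : R := RInt F 0 (2 * PI).

Lemma PI2_pos : 0 < 2 * PI.
Proof. generalize PI_RGT_0; lra. Qed.

Lemma Int_ex (F : R -> R) : (forall t, continuous F t) -> ex_RInt F 0 (2 * PI).
Proof. intros H. apply (@ex_RInt_continuous R_CompleteNormedModule). intros; apply H. Qed.

Lemma Int_plus (F1 F2 : R -> R) : (forall t, continuous F1 t) -> (forall t, continuous F2 t) ->
  Int (fun t => F1 t + F2 t) = Int F1 + Int F2.
Proof. intros H1 H2. unfold Int. apply (RInt_plus F1 F2); apply Int_ex; auto. Qed.

Lemma Int_scal (F : R -> R) c : (forall t, continuous F t) -> Int (fun t => c * F t) = c * Int F.
Proof. intros H. unfold Int. apply (RInt_scal F 0 (2*PI) c). apply Int_ex; auto. Qed.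

Lemma Int_ext (F1 F2 : R -> R) : (forall t, F1 t = F2 t) -> Int F1 = Int F2.
Proof. intros H. unfold Int. apply RInt_ext. intros; apply H. Qed.

Lemma Int_const c : Int (fun _ => c) = 2 * PI * c.
Proof. unfold Int. rewrite RInt_const. simpl. unfold scal; simpl. unfold mult; simpl. ring. Qed.

Lemma Int_deriv (F dF : R -> R) : (forall t, is_derive F t (dF t)) -> (forall t, continuous dF t) ->
  Int dF = F (2 * PI) - F 0.
Proof.
  intros H1 H2. unfold Int. apply is_RInt_unique.
  apply (is_RInt_derive F dF 0 (2*PI)); intros; auto.
Qed.

Lemma Int_le (F1 F2 : R -> R) : (forall t, continuous F1 t) -> (forall t, continuous F2 t) ->
  (forall t, F1 t <= F2 t) -> Int F1 <= Int F2.
Proof.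
  intros H1 H2 H. unfold Int. apply RInt_le; [generalize PI2_pos; lra| apply Int_ex; auto | apply Int_ex; auto|].
  intros; auto.
Qed.

Lemma locally_int r : -1 < r < 1 -> locally r (fun y => -1 < y < 1).
Proof. intro Hr. apply (open_and _ _ (open_gt (-1)) (open_lt 1)). exact Hr. Qed.

Lemma locally2_int r t : -1 < r < 1 -> locally_2d (fun u v => -1 < u < 1) r t.
Proof.
  intro Hr. assert (He : 0 < Rmin (r + 1) (1 - r)) by (apply Rmin_pos; lra).
  exists (mkposreal _ He). intros u v Hu _. simpl in Hu.
  generalize (Rmin_l (r+1) (1-r)) (Rmin_r (r+1) (1-r)). intros.
  unfold Rabs in Hu; destruct (Rcase_abs (u - r)); lra.
Qed.

Lemma deriv_int (F F' : R -> R -> R) r :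
  (forall r t, -1 < r < 1 -> is_derive (fun r => F r t) r (F' r t)) ->
  (forall r t, -1 < r < 1 -> continuity_2d_pt F r t) ->
  (forall r t, -1 < r < 1 -> continuity_2d_pt F' r t) ->
  -1 < r < 1 ->
  is_derive (fun r => Int (fun t => F r t)) r (Int (fun t => F' r t)).
Proof.
  intros HD HC HC' Hr. unfold Int.
  replace (RInt (fun t => F' r t) 0 (2 * PI)) with (RInt (fun t => Derive (fun u => F u t) r) 0 (2 * PI)).
  2:{ apply RInt_ext. intros; apply is_derive_unique; auto. }
  apply (is_derive_RInt_param F 0 (2*PI) r).
  - apply (filter_imp (fun y => -1 < y < 1)); [|apply locally_int; auto].
    intros y Hy t _. eexists; apply HD; auto.
  - intros t _. apply continuity_2d_pt_ext_loc with (fun u v => F' u v).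
    + generalize (locally2_int r t Hr). apply locally_2d_impl, locally_2d_forall.
      intros u v Hu. symmetry; apply is_derive_unique; auto.
    + auto.
  - apply (filter_imp (fun y => -1 < y < 1)); [|apply locally_int; auto].
    intros y Hy. apply (@ex_RInt_continuous R_CompleteNormedModule). intros z _. apply cont_of_pt.
    apply cont2_1d_y. auto.
Qed.

Lemma deriv_cont (f : R -> R) r l : is_derive f r l -> continuity_pt f r.
Proof. intro H. apply derivable_continuous_pt. apply ex_derive_Reals_0. eexists; eauto. Qed.

Lemma const_0r (p : R -> R) r :
  0 < r < 1 ->
  (forall x, -1 < x < 1 -> exists l, is_derive p x l) ->
  (forall x, 0 < x < r -> is_derive p x 0) -> p r = p 0.
Proof.
  intros Hr Hd H0.
  destruct (MVT_gen p 0 r (fun _ => 0)) as [c [_ Hc]].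
  - intros x Hx. apply H0. unfold Rmin, Rmax in Hx. destruct (Rle_dec 0 r); lra.
  - intros x Hx. unfold Rmin, Rmax in Hx. destruct (Rle_dec 0 r); [|lra].
    destruct (Hd x ltac:(lra)) as [l Hl]. eapply deriv_cont; eauto.
  - lra.
Qed.

Lemma const_r1r2 (p : R -> R) r1 r2 :
  0 < r1 < 1 -> 0 < r2 < 1 ->
  (forall x, 0 < x < 1 -> is_derive p x 0) -> p r1 = p r2.
Proof.
  intros H1 H2 H0.
  destruct (MVT_gen p r1 r2 (fun _ => 0)) as [c [_ Hc]].
  - intros x Hx. apply H0. unfold Rmin, Rmax in Hx. destruct (Rle_dec r1 r2); lra.
  - intros x Hx. unfold Rmin, Rmax in Hx. 
    apply (deriv_cont p x 0). apply H0. destruct (Rle_dec r1 r2); lra.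
  - lra.
Qed.

Lemma cont_ex (f : R -> R) x : ex_derive f x -> continuous f x.
Proof. intro H. apply (ex_derive_continuous (K := R_AbsRing) (V := R_NormedModule)). exact H. Qed.


Definition nice (G Gx Gy Gxx Gxy Gyx Gyy : R -> R -> R) : Prop :=
  forall x y, in_disc x y ->
    differentiable_pt_lim G x y (Gx x y) (Gy x y) /\
    differentiable_pt_lim Gx x y (Gxx x y) (Gxy x y) /\
    differentiable_pt_lim Gy x y (Gyx x y) (Gyy x y) /\
    continuity_2d_pt Gxx x y /\ continuity_2d_pt Gxy x y /\
    continuity_2d_pt Gyx x y /\ continuity_2d_pt Gyy x y /\
    Gxx x y + Gyy x y = 0.

Section KL.
Variables zx zy : R.
Hypothesis Hz : zx ^ 2 + zy ^ 2 < 1.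
Variables G Gx Gy Gxx Gxy Gyx Gyy : R -> R -> R.
Hypothesis HG : nice G Gx Gy Gxx Gxy Gyx Gyy.

Definition comp (H : R -> R -> R) r t := H (g1 zx zy r t) (g2 zx zy r t).
Definition a1 := A1 zx zy.
Definition a2 := A2 zx zy.
Definition e1 := E1 zx zy.
Definition e2 := E2 zx zy.

Lemma gdisc r t : -1 < r < 1 -> in_disc (g1 zx zy r t) (g2 zx zy r t).
Proof. intro Hr. apply g_disc; auto. Qed.

Lemma comp_dr H Hx Hy r t :
  (forall x y, in_disc x y -> differentiable_pt_lim H x y (Hx x y) (Hy x y)) -> -1 < r < 1 ->
  is_derive (fun r => comp H r t) r (comp Hx r t * a1 r t + comp Hy r t * a2 r t).
Proof.
  intros HH Hr. apply is_derive_Reals.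
  apply (derivable_pt_lim_comp_2d H (fun r => g1 zx zy r t) (fun r => g2 zx zy r t)).
  - apply HH, gdisc; auto.
  - apply is_derive_Reals, g1_dr; auto.
  - apply is_derive_Reals, g2_dr; auto.
Qed.

Lemma comp_dt H Hx Hy r t :
  (forall x y, in_disc x y -> differentiable_pt_lim H x y (Hx x y) (Hy x y)) -> -1 < r < 1 ->
  is_derive (fun t => comp H r t) t (comp Hx r t * (- (r * a2 r t)) + comp Hy r t * (r * a1 r t)).
Proof.
  intros HH Hr. apply is_derive_Reals.
  apply (derivable_pt_lim_comp_2d H (fun t => g1 zx zy r t) (fun t => g2 zx zy r t)).
  - apply HH, gdisc; auto.
  - apply is_derive_Reals, g1_dt; auto.
  - apply is_derive_Reals, g2_dt; auto.
Qed.

Lemma comp_cont H r t :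
  (forall x y, in_disc x y -> continuity_2d_pt H x y) -> -1 < r < 1 ->
  continuity_2d_pt (comp H) r t.
Proof.
  intros HH Hr. unfold comp. apply cont2_comp.
  - apply HH, gdisc; auto.
  - apply cont_g1; auto.
  - apply cont_g2; auto.
Qed.

Lemma dG x y : in_disc x y -> differentiable_pt_lim G x y (Gx x y) (Gy x y).
Proof. intro H; apply (HG x y H). Qed.
Lemma dGx x y : in_disc x y -> differentiable_pt_lim Gx x y (Gxx x y) (Gxy x y).
Proof. intro H; apply (HG x y H). Qed.
Lemma dGy x y : in_disc x y -> differentiable_pt_lim Gy x y (Gyx x y) (Gyy x y).
Proof. intro H; apply (HG x y H). Qed.
Lemma cG x y : in_disc x y -> continuity_2d_pt G x y.
Proof. intro H; apply differentiable_continuity_pt. do 2 eexists; apply dG; auto. Qed.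
Lemma cGx x y : in_disc x y -> continuity_2d_pt Gx x y.
Proof. intro H; apply differentiable_continuity_pt. do 2 eexists; apply dGx; auto. Qed.
Lemma cGy x y : in_disc x y -> continuity_2d_pt Gy x y.
Proof. intro H; apply differentiable_continuity_pt. do 2 eexists; apply dGy; auto. Qed.
Lemma cGxx x y : in_disc x y -> continuity_2d_pt Gxx x y.
Proof. intro H; apply (HG x y H). Qed.
Lemma cGxy x y : in_disc x y -> continuity_2d_pt Gxy x y.
Proof. intro H; apply (HG x y H). Qed.
Lemma cGyx x y : in_disc x y -> continuity_2d_pt Gyx x y.
Proof. intro H; apply (HG x y H). Qed.
Lemma cGyy x y : in_disc x y -> continuity_2d_pt Gyy x y.
Proof. intro H; apply (HG x y H). Qed.
Lemma lapG x y : in_disc x y -> Gxx x y + Gyy x y = 0.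
Proof. intro H; apply (HG x y H). Qed.

Definition gg r t := comp G r t.
Definition gr r t := comp Gx r t * a1 r t + comp Gy r t * a2 r t.
Definition PP r t := comp Gx r t * (r * a1 r t) + comp Gy r t * (r * a2 r t).
Definition TT r t := comp Gx r t * (- (r * a2 r t)) + comp Gy r t * (r * a1 r t).
Definition Pr r t :=
  (comp Gxx r t * a1 r t + comp Gxy r t * a2 r t) * (r * a1 r t) + comp Gx r t * e1 r t +
  ((comp Gyx r t * a1 r t + comp Gyy r t * a2 r t) * (r * a2 r t) + comp Gy r t * e2 r t).
Definition Tt r t :=
  (comp Gxx r t * (- (r * a2 r t)) + comp Gxy r t * (r * a1 r t)) * (- (r * a2 r t)) +
  comp Gx r t * (- (r * e1 r t)) +
  ((comp Gyx r t * (- (r * a2 r t)) + comp Gyy r t * (r * a1 r t)) * (r * a1 r t) +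
  comp Gy r t * (- (r * e2 r t))).

Lemma gg_dr r t : -1 < r < 1 -> is_derive (fun r => gg r t) r (gr r t).
Proof. intro Hr. apply comp_dr; auto. exact dG. Qed.
Lemma gg_dt r t : -1 < r < 1 -> is_derive (fun t => gg r t) t (TT r t).
Proof. intro Hr. apply comp_dt; auto. exact dG. Qed.

Lemma PP_dr r t : -1 < r < 1 -> is_derive (fun r => PP r t) r (Pr r t).
Proof.
  intro Hr. unfold PP.
  eapply isd_eq.
  - apply isd_plus.
    + apply (isd_mult (fun r => comp Gx r t) (fun r => r * a1 r t)).
      * apply comp_dr; auto. exact dGx.
      * apply v1_dr; auto.
    + apply (isd_mult (fun r => comp Gy r t) (fun r => r * a2 r t)).
      * apply comp_dr; auto. exact dGy.
      * apply v2_dr; auto.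
  - unfold Pr, e1, e2. ring.
Qed.

Lemma TT_dt r t : -1 < r < 1 -> is_derive (fun t => TT r t) t (Tt r t).
Proof.
  intro Hr. unfold TT.
  eapply isd_eq.
  - apply isd_plus.
    + apply (isd_mult (fun t => comp Gx r t) (fun t => - (r * a2 r t))).
      * apply comp_dt; auto. exact dGx.
      * apply (is_derive_opp (fun t => r * a2 r t)). apply v2_dt; auto.
    + apply (isd_mult (fun t => comp Gy r t) (fun t => r * a1 r t)).
      * apply comp_dt; auto. exact dGy.
      * apply v1_dt; auto.
  - unfold Tt, e1, e2. simpl. unfold opp; simpl. ring.
Qed.

Lemma key_id r t : -1 < r < 1 -> r * Pr r t + Tt r t = 0.
Proof.
  intro Hr. generalize (lapG _ _ (gdisc r t Hr)). intro L.
  unfold Pr, Tt. fold (comp Gxx r t) in L. fold (comp Gyy r t) in L.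
  replace (comp Gyy r t) with (- comp Gxx r t) by lra. ring.
Qed.

Ltac contc Hr := repeat first
  [ apply comp_cont; [first [exact cG | exact cGx | exact cGy | exact cGxx | exact cGxy | exact cGyx | exact cGyy] | exact Hr]
  | apply cont_A1; [exact Hz | exact Hr]
  | apply cont_A2; [exact Hz | exact Hr]
  | apply cont_E1; [exact Hz | exact Hr]
  | apply cont_E2; [exact Hz | exact Hr]
  | apply continuity_2d_pt_mult
  | apply continuity_2d_pt_plus
  | apply continuity_2d_pt_opp
  | apply continuity_2d_pt_id1
  | apply continuity_2d_pt_const
  | apply cont2_cos
  | apply cont2_sin ].

Lemma c_gg r t : -1 < r < 1 -> continuity_2d_pt gg r t.
Proof. intro Hr. unfold gg. contc Hr. Qed.
Lemma c_gr r t : -1 < r < 1 -> continuity_2d_pt gr r t.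
Proof. intro Hr. unfold gr, a1, a2. contc Hr. Qed.
Lemma c_PP r t : -1 < r < 1 -> continuity_2d_pt PP r t.
Proof. intro Hr. unfold PP, a1, a2. contc Hr. Qed.
Lemma c_TT r t : -1 < r < 1 -> continuity_2d_pt TT r t.
Proof. intro Hr. unfold TT, a1, a2. contc Hr. Qed.
Lemma c_Pr r t : -1 < r < 1 -> continuity_2d_pt Pr r t.
Proof. intro Hr. unfold Pr, a1, a2, e1, e2. contc Hr. Qed.
Lemma c_Tt r t : -1 < r < 1 -> continuity_2d_pt Tt r t.
Proof. intro Hr. unfold Tt, a1, a2, e1, e2. contc Hr. Qed.


Lemma cont_t (F : R -> R -> R) r t : continuity_2d_pt F r t -> continuous (fun t => F r t) t.
Proof. intro H. apply cont_of_pt. apply cont2_1d_y. exact H. Qed.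

Lemma cont2_w (w : R -> R) r t : continuity_pt w t -> continuity_2d_pt (fun _ v => w v) r t.
Proof. intro H. apply (continuity_1d_2d_pt_comp w (fun _ v => v)). exact H. apply continuity_2d_pt_id2. Qed.

Lemma isd_mulc (f : R -> R) x l c : is_derive f x l -> is_derive (fun y => f y * c) x (l * c).
Proof. intro H. apply (isd_eq _ _ (c * l)); [|ring].
  apply (is_derive_ext (fun y => c * f y)); [intros; simpl; ring|].
  apply is_derive_scal; auto. Qed.

Lemma d1_0 t : d1 zx zy 0 t = 1.
Proof. unfold d1; ring. Qed.
Lemma d2_0 t : d2 zx zy 0 t = 0.
Proof. unfold d2; ring. Qed.
Lemma g1_0 t : g1 zx zy 0 t = zx.
Proof. unfold g1, QQ. rewrite d1_0, d2_0. field. Qed.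
Lemma g2_0 t : g2 zx zy 0 t = zy.
Proof. unfold g2, QQ. rewrite d1_0, d2_0. field. Qed.
Lemma A1_0 t : A1 zx zy 0 t = kk zx zy * cos t.
Proof. unfold A1, QQ. rewrite d1_0, d2_0. field. Qed.
Lemma A2_0 t : A2 zx zy 0 t = kk zx zy * sin t.
Proof. unfold A2, QQ. rewrite d1_0, d2_0. field. Qed.

Lemma TT_per r : TT r (2 * PI) = TT r 0.
Proof.
  unfold TT, comp, g1, g2, a1, a2, A1, A2, QQ, d1, d2.
  rewrite cos_2PI, sin_2PI, cos_0, sin_0. reflexivity.
Qed.
Lemma gg_per r : gg r (2 * PI) = gg r 0.
Proof.
  unfold gg, comp, g1, g2, QQ, d1, d2.
  rewrite cos_2PI, sin_2PI, cos_0, sin_0. reflexivity.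
Qed.

Lemma Int_zero_deriv (F dF : R -> R) : (forall t, is_derive F t (dF t)) -> (forall t, continuous dF t) ->
  F (2 * PI) = F 0 -> Int dF = 0.
Proof. intros H1 H2 H3. rewrite (Int_deriv F dF H1 H2), H3. apply Rminus_diag_eq; reflexivity. Qed.

Definition mm r := Int (fun t => gg r t).
Definition m1 r := Int (fun t => gr r t).

Lemma mm_d r : -1 < r < 1 -> is_derive mm r (m1 r).
Proof. intro Hr. apply deriv_int; auto. exact gg_dr. exact c_gg. exact c_gr. Qed.

Lemma pp_eq r : -1 < r < 1 -> Int (fun t => PP r t) = r * m1 r.
Proof.
  intro Hr. unfold m1. rewrite <- Int_scal.
  - apply Int_ext. intros; unfold PP, gr; ring.
  - intros; apply cont_t, c_gr; auto.
Qed.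

Lemma pp_d r : -1 < r < 1 -> is_derive (fun r => Int (fun t => PP r t)) r (Int (fun t => Pr r t)).
Proof. intro Hr. apply deriv_int; auto. exact PP_dr. exact c_PP. exact c_Pr. Qed.

Lemma Pr_int r : -1 < r < 1 -> r * Int (fun t => Pr r t) = 0.
Proof.
  intro Hr.
  assert (H1 : Int (fun t => r * Pr r t + Tt r t) = 0).
  { rewrite (Int_ext _ (fun _ => 0)). rewrite Int_const; ring. intros; apply key_id; auto. }
  rewrite Int_plus, Int_scal in H1.
  - rewrite (Int_zero_deriv (TT r) (Tt r)) in H1.
    + rewrite Rplus_0_r in H1; exact H1.
    + intros; apply TT_dt; auto.
    + intros; apply cont_t, c_Tt; auto.
    + apply TT_per.
  - intros; apply cont_t, c_Pr; auto.
  - intro t. apply (cont_t (fun r0 t => r * Pr r0 t)).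
    apply continuity_2d_pt_mult. apply continuity_2d_pt_const. apply c_Pr; auto.
  - intros; apply cont_t, c_Tt; auto.
Qed.

Lemma m1_zero r : 0 < r < 1 -> m1 r = 0.
Proof.
  intro Hr.
  assert (E : Int (fun t => PP r t) = Int (fun t => PP 0 t)).
  { apply (const_0r (fun r => Int (fun t => PP r t))); auto.
    - intros x Hx. eexists; apply pp_d; auto.
    - intros x Hx. eapply isd_eq. apply pp_d; lra.
      generalize (Pr_int x ltac:(lra)). intro H.
      apply Rmult_integral in H. destruct H; [lra|auto]. }
  rewrite !pp_eq in E by lra. rewrite Rmult_0_l in E.
  apply Rmult_integral in E. destruct E; [lra|auto].
Qed.

Lemma MVP r : 0 < r < 1 -> Int (fun t => gg r t) = 2 * PI * G zx zy.
Proof.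
  intro Hr. fold (mm r).
  rewrite (const_0r mm r Hr).
  - unfold mm, gg, comp. rewrite (Int_ext _ (fun _ => G zx zy)). apply Int_const.
    intros; rewrite g1_0, g2_0; auto.
  - intros x Hx. eexists; apply mm_d; auto.
  - intros x Hx. eapply isd_eq. apply mm_d; lra. apply m1_zero; lra.
Qed.

Section W.
Variables w w' : R -> R.
Hypothesis Hw1 : forall t, is_derive w t (w' t).
Hypothesis Hw2 : forall t, is_derive w' t (- w t).
Hypothesis Hw3 : w (2 * PI) = w 0.
Hypothesis Hw4 : w' (2 * PI) = w' 0.

Lemma cw t : continuity_pt w t.
Proof. eapply deriv_cont; eauto. Qed.
Lemma cw' t : continuity_pt w' t.
Proof. eapply deriv_cont; eauto. Qed.

Ltac cw2 := apply continuity_2d_pt_mult; [|apply cont2_w; first [apply cw | apply cw']].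

Definition NN r := Int (fun t => gg r t * w t).
Definition N1 r := Int (fun t => gr r t * w t).
Definition qq r := Int (fun t => PP r t * w t).

Lemma NN_d r : -1 < r < 1 -> is_derive NN r (N1 r).
Proof.
  intro Hr. apply (deriv_int (fun r t => gg r t * w t) (fun r t => gr r t * w t)); auto.
  - intros; apply isd_mulc, gg_dr; auto.
  - intros; cw2; apply c_gg; auto.
  - intros; cw2; apply c_gr; auto.
Qed.

Lemma qq_eq r : -1 < r < 1 -> qq r = r * N1 r.
Proof.
  intro Hr. unfold N1, qq. rewrite <- Int_scal.
  - apply Int_ext. intros; unfold PP, gr; ring.
  - intros; apply (cont_t (fun r t => gr r t * w t)). cw2. apply c_gr; auto.
Qed.

Lemma qq_d r : -1 < r < 1 -> is_derive qq r (Int (fun t => Pr r t * w t)).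
Proof.
  intro Hr. apply (deriv_int (fun r t => PP r t * w t) (fun r t => Pr r t * w t)); auto.
  - intros; apply isd_mulc, PP_dr; auto.
  - intros; cw2; apply c_PP; auto.
  - intros; cw2; apply c_Pr; auto.
Qed.

Lemma Int_w : Int w = 0.
Proof.
  assert (H : Int (fun t => - w t) = 0).
  { apply (Int_zero_deriv w'); auto. intros; apply cont_of_pt.
    apply continuity_pt_opp. apply cw. }
  rewrite (Int_ext _ (fun t => -1 * w t)) in H by (intros; ring).
  rewrite Int_scal in H. lra. intros; apply cont_of_pt, cw.
Qed.

Lemma key_w r : -1 < r < 1 -> r * Int (fun t => Pr r t * w t) = NN r.
Proof.
  intro Hr.
  assert (C1 : forall t, continuous (fun t => Pr r t * w t) t).
  { intros; apply (cont_t (fun r t => Pr r t * w t)). cw2. apply c_Pr; auto. }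
  assert (C2 : forall t, continuous (fun t => Tt r t * w t) t).
  { intros; apply (cont_t (fun r t => Tt r t * w t)). cw2. apply c_Tt; auto. }
  assert (C3 : forall t, continuous (fun t => TT r t * w' t) t).
  { intros; apply (cont_t (fun r t => TT r t * w' t)). cw2. apply c_TT; auto. }
  assert (C4 : forall t, continuous (fun t => gg r t * w t) t).
  { intros; apply (cont_t (fun r t => gg r t * w t)). cw2. apply c_gg; auto. }
  assert (H1 : Int (fun t => Tt r t * w t + TT r t * w' t) = 0).
  { apply (Int_zero_deriv (fun t => TT r t * w t)).
    - intros. apply isd_mult; auto. apply TT_dt; auto.
    - intros. apply (continuous_ext (fun t => Tt r t * w t + TT r t * w' t)); [auto|].
      apply (cont_t (fun r t => Tt r t * w t + TT r t * w' t)).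
      apply continuity_2d_pt_plus; cw2; [apply c_Tt|apply c_TT]; auto.
    - rewrite TT_per, Hw3. reflexivity. }
  assert (H2 : Int (fun t => TT r t * w' t + -1 * (gg r t * w t)) = 0).
  { apply (Int_zero_deriv (fun t => gg r t * w' t)).
    - intros. eapply isd_eq. apply isd_mult; auto. apply gg_dt; auto. ring.
    - intros. apply (continuous_ext (fun t => TT r t * w' t + -1 * (gg r t * w t))); [auto|].
      apply (cont_t (fun r t => TT r t * w' t + -1 * (gg r t * w t))).
      apply continuity_2d_pt_plus; [|apply continuity_2d_pt_mult; [apply continuity_2d_pt_const|]];
      cw2; [apply c_TT|apply c_gg]; auto.
    - rewrite gg_per, Hw4. reflexivity. }
  rewrite Int_plus in H1, H2; auto.
  2:{ intros t. apply (continuous_ext (fun t => -1 * (gg r t * w t))); [auto|].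
      apply (cont_t (fun r t => -1 * (gg r t * w t))).
      apply continuity_2d_pt_mult; [apply continuity_2d_pt_const|]. cw2; apply c_gg; auto. }
  rewrite Int_scal in H2; auto.
  rewrite <- Int_scal; auto.
  rewrite (Int_ext _ (fun t => -1 * (Tt r t * w t))).
  2:{ intros t. generalize (key_id r t Hr). intro K. nra. }
  rewrite Int_scal; auto. unfold NN. lra.
Qed.

Lemma rN1 r : 0 < r < 1 -> r * N1 r = NN r.
Proof.
  intro Hr.
  pose (Phi := fun r => r * (qq r - NN r)).
  assert (D : forall x, -1 < x < 1 -> is_derive Phi x 0).
  { intros x Hx. unfold Phi.
    eapply isd_eq.
    - apply (isd_mult (fun r => r) (fun r => qq r - NN r)).
      + apply (is_derive_id (K := R_AbsRing)).
      + apply (is_derive_minus qq NN). apply qq_d; auto. apply NN_d; auto.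
    - simpl. unfold minus, plus, opp; simpl. rewrite qq_eq by auto.
      generalize (key_w x Hx). intro K. unfold one; simpl. nra. }
  assert (E : Phi r = Phi 0).
  { apply const_0r; auto. intros x Hx; eexists; apply D; auto.
    intros x Hx; apply D; lra. }
  unfold Phi in E. rewrite Rmult_0_l in E. apply Rmult_integral in E.
  destruct E; [lra|]. rewrite <- qq_eq by lra. lra.
Qed.

Lemma NN0 : NN 0 = 0.
Proof.
  unfold NN, gg, comp. rewrite (Int_ext _ (fun t => G zx zy * w t)).
  rewrite Int_scal, Int_w. ring. intros; apply cont_of_pt, cw.
  intros; rewrite g1_0, g2_0; auto.
Qed.

Lemma NN_lin r : 0 < r < 1 -> NN r = r * N1 0.
Proof.
  intro Hr.
  pose (L := fun r => NN r * / r).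
  assert (D : forall x, 0 < x < 1 -> is_derive L x 0).
  { intros x Hx. unfold L. eapply isd_eq.
    - apply (isd_mult NN (fun r => / r)). apply NN_d; lra.
      apply (is_derive_inv (fun r => r) x 1). apply (is_derive_id (K := R_AbsRing)). lra.
    - generalize (rN1 x Hx). intro K. simpl. field_simplify; [|lra].
      unfold Rdiv. replace (N1 x * x - NN x) with 0 by lra. ring. }
  assert (Lc : forall r', 0 < r' < 1 -> L r' = L r).
  { intros; apply const_r1r2; auto. }
  assert (HL : L r = N1 0).
  { generalize (NN_d 0 ltac:(lra)). intro Hd. apply is_derive_Reals in Hd.
    apply Rle_antisym; apply Rnot_lt_le; intro Hlt.
    - destruct (Hd (L r - N1 0) ltac:(lra)) as [dl Hdl].
      set (h := Rmin (dl / 2) (1 / 2)).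
      assert (Hh : 0 < h) by (apply Rmin_pos; generalize (cond_pos dl); lra).
      assert (Hh2 : h < 1) by (generalize (Rmin_r (dl/2) (1/2)); unfold h; lra).
      assert (Hh3 : Rabs h < dl).
      { rewrite Rabs_pos_eq by lra. generalize (Rmin_l (dl/2) (1/2)) (cond_pos dl). unfold h; lra. }
      specialize (Hdl h ltac:(lra) Hh3). rewrite Rplus_0_l, NN0, Rminus_0_r in Hdl.
      rewrite <- (Lc h) in Hdl by lra. unfold L, Rdiv in Hdl.
      apply Rabs_def2 in Hdl. lra.
    - destruct (Hd (N1 0 - L r) ltac:(lra)) as [dl Hdl].
      set (h := Rmin (dl / 2) (1 / 2)).
      assert (Hh : 0 < h) by (apply Rmin_pos; generalize (cond_pos dl); lra).
      assert (Hh2 : h < 1) by (generalize (Rmin_r (dl/2) (1/2)); unfold h; lra).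
      assert (Hh3 : Rabs h < dl).
      { rewrite Rabs_pos_eq by lra. generalize (Rmin_l (dl/2) (1/2)) (cond_pos dl). unfold h; lra. }
      specialize (Hdl h ltac:(lra) Hh3). rewrite Rplus_0_l, NN0, Rminus_0_r in Hdl.
      rewrite <- (Lc h) in Hdl by lra. unfold L, Rdiv in Hdl.
      apply Rabs_def2 in Hdl. lra. }
  unfold L in HL. rewrite <- HL. field. lra.
Qed.

End W.

Lemma gr0 t : gr 0 t = kk zx zy * (Gx zx zy * cos t + Gy zx zy * sin t).
Proof. unfold gr, comp, a1, a2. rewrite g1_0, g2_0, A1_0, A2_0. ring. Qed.

Lemma KLc r : 0 < r < 1 -> Int (fun t => gg r t * cos t) = r * (kk zx zy * Gx zx zy * PI).
Proof.
  intro Hr.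
  assert (Hw1 : forall t, is_derive cos t (- sin t)) by (intros; auto_derive; auto; ring).
  assert (Hw2 : forall t, is_derive (fun t => - sin t) t (- cos t)) by (intros; auto_derive; auto; ring).
  generalize (NN_lin cos (fun t => - sin t) Hw1 Hw2 ltac:(cbv beta; rewrite cos_2PI, cos_0; auto)
    ltac:(cbv beta; rewrite sin_2PI, sin_0; auto) r Hr).
  unfold NN, N1. intros ->. f_equal.
  rewrite (Int_ext _ (fun t => kk zx zy * (Gx zx zy * cos t + Gy zx zy * sin t) * cos t)).
  2: intros; rewrite gr0; auto.
  rewrite (Int_deriv (fun t => kk zx zy * (Gx zx zy * (t / 2 + sin t * cos t / 2) + Gy zx zy * (sin t ^ 2 / 2)))).
  - rewrite sin_2PI, cos_2PI, sin_0, cos_0. field.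
  - intros t. auto_derive; auto. generalize (sin2_cos2 t). unfold Rsqr. intro H. match goal with |- @eq _ ?a ?b => change (@eq R a b) end.
    replace (sin t * (1 * - sin t)) with (cos t * cos t - 1) by lra. field.
  - intros t. apply cont_ex. auto_derive; auto.
Qed.

Lemma KLs r : 0 < r < 1 -> Int (fun t => gg r t * sin t) = r * (kk zx zy * Gy zx zy * PI).
Proof.
  intro Hr.
  assert (Hw1 : forall t, is_derive sin t (cos t)) by (intros; auto_derive; auto; ring).
  assert (Hw2 : forall t, is_derive cos t (- sin t)) by (intros; auto_derive; auto; ring).
  generalize (NN_lin sin cos Hw1 Hw2 ltac:(cbv beta; rewrite sin_2PI, sin_0; auto)
    ltac:(cbv beta; rewrite cos_2PI, cos_0; auto) r Hr).
  unfold NN, N1. intros ->. f_equal.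
  rewrite (Int_ext _ (fun t => kk zx zy * (Gx zx zy * cos t + Gy zx zy * sin t) * sin t)).
  2: intros; rewrite gr0; auto.
  rewrite (Int_deriv (fun t => kk zx zy * (Gx zx zy * (sin t ^ 2 / 2) + Gy zx zy * (t / 2 - sin t * cos t / 2)))).
  - rewrite sin_2PI, cos_2PI, sin_0, cos_0. field.
  - intros t. auto_derive; auto. generalize (sin2_cos2 t). unfold Rsqr. intro H. match goal with |- @eq _ ?a ?b => change (@eq R a b) end.
    replace (1 * cos t * cos t) with (1 - sin t * sin t) by lra. field.
  - intros t. apply cont_ex. auto_derive; auto.
Qed.

End KL.



Definition sumL (l : list nat) (F : nat -> R) := fold_right Rplus 0 (map F l).

Lemma sumL_plus l F1 F2 : sumL l (fun i => F1 i + F2 i) = sumL l F1 + sumL l F2.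
Proof. induction l; unfold sumL in *; simpl; [ring|]. rewrite IHl; ring. Qed.
Lemma sumL_scal l F c : sumL l (fun i => c * F i) = c * sumL l F.
Proof. induction l; unfold sumL in *; simpl; [ring|]. rewrite IHl; ring. Qed.
Lemma sumL_ext l F1 F2 : (forall i, F1 i = F2 i) -> sumL l F1 = sumL l F2.
Proof. intro H. induction l; unfold sumL in *; simpl; auto. rewrite IHl, H; auto. Qed.
Lemma sumL_nonneg l F : (forall i, 0 <= F i) -> 0 <= sumL l F.
Proof. intro H. induction l; unfold sumL in *; simpl; [lra|]. generalize (H a); lra. Qed.

Lemma dotn_sumL n u v : dotn n u v = sumL (seq 0 n) (fun i => u i * v i).
Proof. reflexivity. Qed.

Lemma dot_comm n u v : dotn n u v = dotn n v u.
Proof. rewrite !dotn_sumL. apply sumL_ext. intros; ring. Qed.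

Lemma dot_lin n a b u w v :
  dotn n (fun i => a * u i + b * w i) v = a * dotn n u v + b * dotn n w v.
Proof.
  rewrite !dotn_sumL. rewrite <- !sumL_scal, <- sumL_plus. apply sumL_ext. intros; ring.
Qed.

Lemma dot_nonneg n u : 0 <= dotn n u u.
Proof. rewrite dotn_sumL. apply sumL_nonneg. intros; nra. Qed.

Lemma dot_sq3 n a b c u v w :
  dotn n (fun i => a * u i + b * v i + c * w i) (fun i => a * u i + b * v i + c * w i) =
  a^2 * dotn n u u + b^2 * dotn n v v + c^2 * dotn n w w +
  2 * a * b * dotn n u v + 2 * a * c * dotn n u w + 2 * b * c * dotn n v w.
Proof.
  rewrite !dotn_sumL.
  rewrite <- !sumL_scal, <- !sumL_plus. apply sumL_ext. intros; ring.
Qed.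

Lemma CS n u v : (dotn n u v) ^ 2 <= dotn n u u * dotn n v v.
Proof.
  assert (H : forall t, 0 <= dotn n u u - 2 * t * dotn n u v + t^2 * dotn n v v).
  { intro t. generalize (dot_nonneg n (fun i => 1 * u i + (- t) * v i + 0 * v i)).
    rewrite dot_sq3. nra. }
  destruct (Req_dec (dotn n v v) 0) as [E|E].
  - rewrite E in H. rewrite E.
    destruct (Req_dec (dotn n u v) 0) as [E2|E2].
    + rewrite E2. lra.
    + exfalso. specialize (H ((dotn n u u + 1) / dotn n u v)).
      generalize (dot_nonneg n u). intro.
      replace (dotn n u u - 2 * ((dotn n u u + 1) / dotn n u v) * dotn n u v + ((dotn n u u + 1) / dotn n u v) ^ 2 * 0)
        with (- dotn n u u - 2) in H by (field; auto). lra.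
  - generalize (dot_nonneg n v). intro. assert (0 < dotn n v v) by lra.
    specialize (H (dotn n u v / dotn n v v)).
    assert (0 <= dotn n u u * dotn n v v - dotn n u v ^ 2).
    { replace (dotn n u u * dotn n v v - dotn n u v ^ 2) with
        ((dotn n u u - 2 * (dotn n u v / dotn n v v) * dotn n u v + (dotn n u v / dotn n v v) ^ 2 * dotn n v v) * dotn n v v) by (field; lra).
      apply Rmult_le_pos; lra. }
    lra.
Qed.

Lemma Bessel n u e nu : dotn n e e = 1 -> dotn n nu nu = 1 -> dotn n e nu = 0 ->
  (dotn n u e) ^ 2 + (dotn n u nu) ^ 2 <= dotn n u u.
Proof.
  intros He Hn Hen.
  generalize (dot_nonneg n (fun i => 1 * u i + (- dotn n u e) * e i + (- dotn n u nu) * nu i)).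
  rewrite dot_sq3. rewrite He, Hn, Hen. nra.
Qed.

Definition lin (l : list nat) (F : nat -> R -> R -> R) (v : nat -> R) (x y : R) :=
  sumL l (fun i => F i x y * v i).

Lemma nice_lin l F Fx Fy Fxx Fxy Fyx Fyy v :
  (forall i, In i l -> nice (F i) (Fx i) (Fy i) (Fxx i) (Fxy i) (Fyx i) (Fyy i)) ->
  nice (lin l F v) (lin l Fx v) (lin l Fy v) (lin l Fxx v) (lin l Fxy v) (lin l Fyx v) (lin l Fyy v).
Proof.
  induction l as [|i l IH]; intros H x y Hxy.
  - unfold lin, sumL; simpl. repeat split; try apply diff_const; try apply continuity_2d_pt_const. ring.
  - destruct (H i (or_introl eq_refl) x y Hxy) as (D1 & D2 & D3 & C1 & C2 & C3 & C4 & L).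
    destruct (IH (fun j Hj => H j (or_intror Hj)) x y Hxy) as (D1' & D2' & D3' & C1' & C2' & C3' & C4' & L').
    unfold lin, sumL in *; simpl.
    repeat split.
    + apply diff_plus; [apply diff_scal|]; auto.
    + apply diff_plus; [apply diff_scal|]; auto.
    + apply diff_plus; [apply diff_scal|]; auto.
    + apply continuity_2d_pt_plus; auto. apply continuity_2d_pt_mult; auto. apply continuity_2d_pt_const.
    + apply continuity_2d_pt_plus; auto. apply continuity_2d_pt_mult; auto. apply continuity_2d_pt_const.
    + apply continuity_2d_pt_plus; auto. apply continuity_2d_pt_mult; auto. apply continuity_2d_pt_const.
    + apply continuity_2d_pt_plus; auto. apply continuity_2d_pt_mult; auto. apply continuity_2d_pt_const.
    + replace (Fxx i x y * v i + fold_right Rplus 0 (map (fun i0 : nat => Fxx i0 x y * v i0) l) +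
       (Fyy i x y * v i + fold_right Rplus 0 (map (fun i0 : nat => Fyy i0 x y * v i0) l)))
      with ((Fxx i x y + Fyy i x y) * v i + (fold_right Rplus 0 (map (fun i0 : nat => Fxx i0 x y * v i0) l) +
       fold_right Rplus 0 (map (fun i0 : nat => Fyy i0 x y * v i0) l))) by ring.
      rewrite L, L'. ring.
Qed.

Lemma nice_C2 g : (forall x y, in_disc x y -> C2_at g x y /\ dx (dx g) x y + dy (dy g) x y = 0) ->
  nice g (dx g) (dy g) (dx (dx g)) (dy (dx g)) (dx (dy g)) (dy (dy g)).
Proof.
  intros H x y Hxy. destruct (H x y Hxy) as [[[e He] (C0 & Cx & Cy & Cxx & Cyx & Cxy & Cyy)] L].
  repeat split; auto.
  - apply diff_partials; auto. exists e. intros u v Hu Hv. destruct (He u v Hu Hv) as (?&?&?&?&?&?); auto.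
  - apply diff_partials; auto. exists e. intros u v Hu Hv. destruct (He u v Hu Hv) as (?&?&?&?&?&?); auto.
  - apply diff_partials; auto. exists e. intros u v Hu Hv. destruct (He u v Hu Hv) as (?&?&?&?&?&?); auto.
Qed.


Ltac Rring := match goal with |- @eq _ ?a ?b => change (@eq R a b) end; ring.

Lemma cR_plus (f g : R -> R) x : continuous f x -> continuous g x -> continuous (fun t => f t + g t) x.
Proof. intros; apply (continuous_plus f g); auto. Qed.
Lemma cR_mult (f g : R -> R) x : continuous f x -> continuous g x -> continuous (fun t => f t * g t) x.
Proof. intros; apply (continuous_mult f g); auto. Qed.
Lemma cR_const (c : R) x : continuous (fun _ : R => c) x.
Proof. apply (continuous_const (U := R_UniformSpace) (V := R_UniformSpace)). Qed.
Lemma cR_cos x : continuous cos x.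
Proof. apply cont_of_pt. apply continuity_cos. Qed.
Lemma cR_sin x : continuous sin x.
Proof. apply cont_of_pt. apply continuity_sin. Qed.

Ltac ctac :=
  match goal with
  | |- continuous (fun t => @?f t + @?g t) _ => apply (cR_plus f g); ctac
  | |- continuous (fun t => @?f t * @?g t) _ => apply (cR_mult f g); ctac
  | |- continuous (fun _ => ?c) _ => apply cR_const
  | |- continuous (fun t => cos t) _ => apply cR_cos
  | |- continuous (fun t => sin t) _ => apply cR_sin
  | |- continuous cos _ => apply cR_cos
  | |- continuous sin _ => apply cR_sin
  | |- _ => auto
  end.

Lemma Int_lin5 (f1 f2 f3 f4 f5 : R -> R) c1 c2 c3 c4 c5 :
  (forall t, continuous f1 t) -> (forall t, continuous f2 t) -> (forall t, continuous f3 t) ->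
  (forall t, continuous f4 t) -> (forall t, continuous f5 t) ->
  Int (fun t => c1 * f1 t + c2 * f2 t + c3 * f3 t + c4 * f4 t + c5 * f5 t) =
  c1 * Int f1 + c2 * Int f2 + c3 * Int f3 + c4 * Int f4 + c5 * Int f5.
Proof.
  intros H1 H2 H3 H4 H5.
  assert (S : forall (g : R -> R) c, (forall t, continuous g t) -> forall t, continuous (fun t => c * g t) t).
  { intros g c Hg t. apply cR_mult; auto. apply cR_const. }
  rewrite !Int_plus; repeat (intros; apply cR_plus); auto.
  rewrite !Int_scal; auto.
Qed.

Lemma Int_cos : Int cos = 0.
Proof. apply (Int_zero_deriv sin cos). intros; auto_derive; auto; Rring. intros; apply cR_cos.
  rewrite sin_2PI, sin_0; auto. Qed.
Lemma Int_sin : Int sin = 0.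
Proof.
  assert (H : Int (fun t => - sin t) = 0).
  { apply (Int_zero_deriv cos). intros; auto_derive; auto; Rring.
    intros t. apply (continuous_ext (fun t => -1 * sin t)).
    - intros x. Rring.
    - apply cR_mult. apply cR_const. apply cR_sin.
    - rewrite cos_2PI, cos_0; auto. }
  rewrite (Int_ext _ (fun t => -1 * sin t)) in H by (intros; ring).
  rewrite Int_scal in H. lra. apply cR_sin.
Qed.

Lemma dot_lt1 n u : in_ball n u -> dotn n u u < 1.
Proof.
  unfold in_ball, normn. intro H. destruct (Rlt_or_le (dotn n u u) 1) as [|H1]; auto.
  exfalso. apply sqrt_le_1_alt in H1. rewrite sqrt_1 in H1. lra.
Qed.

Section PE.
Variables (n : nat) (f : nat -> R -> R -> R).
Hypothesis Hh : harmonic_on_disc n f.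
Hypothesis Hc : forall x y, in_disc x y ->
    dotn n (fx f x y) (fx f x y) = dotn n (fy f x y) (fy f x y) /\
    dotn n (fx f x y) (fy f x y) = 0.
Hypothesis Hb : forall x y, in_disc x y -> in_ball n (fpt f x y).

Definition fxf i := dx (f i).
Definition fyf i := dy (f i).

Lemma nice_G v : nice (lin (seq 0 n) f v) (lin (seq 0 n) (fun i => dx (f i)) v) (lin (seq 0 n) (fun i => dy (f i)) v)
  (lin (seq 0 n) (fun i => dx (dx (f i))) v) (lin (seq 0 n) (fun i => dy (dx (f i))) v)
  (lin (seq 0 n) (fun i => dx (dy (f i))) v) (lin (seq 0 n) (fun i => dy (dy (f i))) v).
Proof.
  apply nice_lin. intros i Hi. apply in_seq in Hi. apply nice_C2.
  intros x y Hxy. apply Hh; [lia|auto].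
Qed.

Lemma main_ineq zx zy e r : in_disc zx zy -> dotn n e e = 1 -> 0 < r < 1 ->
  let X := fx f zx zy in let Y := fy f zx zy in
  let s := dotn n (fpt f zx zy) e in
  let ex := dotn n X e in let ey := dotn n Y e in
  0 < ex ^ 2 + ey ^ 2 ->
  r * (1 - zx ^ 2 - zy ^ 2) * sqrt (ex ^ 2 + ey ^ 2) <= 1 - s ^ 2.
Proof.
  intros Hz He Hr X Y s ex ey Ha.
  set (al := sqrt (ex ^ 2 + ey ^ 2)).
  assert (Hal : 0 < al) by (apply sqrt_lt_R0; auto).
  assert (Hal2 : al * al = ex ^ 2 + ey ^ 2) by (apply sqrt_sqrt; lra).
  set (co := ex / al). set (si := ey / al).
  assert (Hcs : co ^ 2 + si ^ 2 = 1) by (unfold co, si; field_simplify; [rewrite <- Hal2; field|]; lra).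
  assert (Hcoal : co * ex + si * ey = al) by (unfold co, si; field_simplify; [rewrite <- Hal2; field|]; lra).
  destruct (Hc zx zy Hz) as [HXY1 HXY2].
  fold X in HXY1, HXY2. fold Y in HXY1, HXY2.
  set (lam2 := dotn n X X).
  assert (HYY : dotn n Y Y = lam2) by (unfold lam2; rewrite HXY1; auto).
  assert (Hal_lam : al ^ 2 <= lam2).
  { generalize (CS n (fun i => co * X i + si * Y i + 0 * X i) e). rewrite He.
    rewrite dot_sq3.
    replace (dotn n (fun i => co * X i + si * Y i + 0 * X i) e) with (co * ex + si * ey).
    2:{ rewrite (dotn_sumL n (fun i => co * X i + si * Y i + 0 * X i)). unfold ex, ey.
        rewrite !dotn_sumL. rewrite <- !sumL_scal, <- sumL_plus. apply sumL_ext; intros; ring. }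
    rewrite Hcoal. fold lam2. rewrite HYY, HXY2. nra. }
  assert (Hlam : 0 < lam2) by nra.
  set (lam := sqrt lam2).
  assert (Hlam0 : 0 < lam) by (apply sqrt_lt_R0; auto).
  assert (Hlam2 : lam * lam = lam2) by (apply sqrt_sqrt; lra).
  assert (Hallam : al <= lam).
  { apply Rsqr_incr_0_var; [|lra]. unfold Rsqr. nra. }
  set (nu := fun i => (- si) / lam * X i + co / lam * Y i).
  assert (Hnu1 : dotn n nu nu = 1).
  { unfold nu. generalize (dot_sq3 n (- si / lam) (co / lam) 0 X Y X). intro D.
    rewrite (dotn_sumL n (fun i => - si / lam * X i + co / lam * Y i + 0 * X i)) in D.
    rewrite (sumL_ext _ _ (fun i => (- si / lam * X i + co / lam * Y i) * (- si / lam * X i + co / lam * Y i))) in D by (intros; ring).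
    rewrite dotn_sumL. rewrite D. fold lam2. rewrite HYY, HXY2.
    rewrite <- Hcs. rewrite <- Hlam2. field. lra. }
  assert (Henu : dotn n e nu = 0).
  { unfold nu. rewrite dot_comm, dot_lin. fold ex ey.
    unfold co, si. field. split; lra. }
  assert (HXnu : dotn n X nu = - si * lam).
  { unfold nu. rewrite dot_comm, dot_lin. rewrite (dot_comm n Y X), HXY2. fold lam2. rewrite <- Hlam2. field. lra. }
  assert (HYnu : dotn n Y nu = co * lam).
  { unfold nu. rewrite dot_comm, dot_lin. rewrite HXY2, HYY. rewrite <- Hlam2. field. lra. }
  assert (Hz' : zx ^ 2 + zy ^ 2 < 1) by exact Hz.
  pose proof (nice_G e) as NGe. pose proof (nice_G nu) as NGn.
  pose (a1 := fun t => gg zx zy (lin (seq 0 n) f e) r t).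
  pose (a2 := fun t => gg zx zy (lin (seq 0 n) f nu) r t).
  assert (Ca1 : forall t, continuous a1 t).
  { intro t. apply (cont_t (gg zx zy (lin (seq 0 n) f e))). eapply c_gg; eauto. lra. }
  assert (Ca2 : forall t, continuous a2 t).
  { intro t. apply (cont_t (gg zx zy (lin (seq 0 n) f nu))). eapply c_gg; eauto. lra. }
  assert (I0 : Int a1 = 2 * PI * s) by (unfold a1; erewrite MVP; eauto; reflexivity).
  assert (I1c : Int (fun t => a1 t * cos t) = r * (kk zx zy * ex * PI)) by (unfold a1; erewrite KLc; eauto; reflexivity).
  assert (I1s : Int (fun t => a1 t * sin t) = r * (kk zx zy * ey * PI)) by (unfold a1; erewrite KLs; eauto; reflexivity).
  assert (I2c : Int (fun t => a2 t * cos t) = r * (kk zx zy * dotn n X nu * PI)) by (unfold a2; erewrite KLc; eauto; reflexivity).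
  assert (I2s : Int (fun t => a2 t * sin t) = r * (kk zx zy * dotn n Y nu * PI)) by (unfold a2; erewrite KLs; eauto; reflexivity).
  assert (Hs1 : s ^ 2 < 1).
  { unfold s. generalize (CS n (fpt f zx zy) e). rewrite He.
    generalize (dot_lt1 _ _ (Hb zx zy Hz)). lra. }
  assert (PW : forall t,
    2 * s * a1 t + ((1 + s ^ 2) * co) * (a1 t * cos t) + ((1 + s ^ 2) * si) * (a1 t * sin t)
    + ((1 - s ^ 2) * co) * (a2 t * sin t) + (- ((1 - s ^ 2) * si)) * (a2 t * cos t)
    <= (1 + s ^ 2) + (2 * s * co) * cos t + (2 * s * si) * sin t).
  { intro t.
    assert (Hd : in_disc (g1 zx zy r t) (g2 zx zy r t)) by (apply g_disc; auto; lra).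
    set (u := fpt f (g1 zx zy r t) (g2 zx zy r t)).
    assert (Hu : dotn n u u < 1) by (apply dot_lt1; apply Hb; auto).
    assert (HB : (dotn n u e) ^ 2 + (dotn n u nu) ^ 2 <= dotn n u u) by (apply Bessel; auto).
    assert (E1 : a1 t = dotn n u e) by reflexivity.
    assert (E2 : a2 t = dotn n u nu) by reflexivity.
    rewrite E1, E2.
    set (b1 := dotn n u e) in *. set (b2 := dotn n u nu) in *.
    set (C := co * cos t + si * sin t). set (S := co * sin t - si * cos t).
    assert (HCS : C ^ 2 + S ^ 2 = 1).
    { replace (C ^ 2 + S ^ 2) with ((co ^ 2 + si ^ 2) * (sin t * sin t + cos t * cos t)) by (unfold C, S; ring).
      rewrite Hcs. generalize (sin2_cos2 t); unfold Rsqr; intro HH. rewrite HH. ring. }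
    assert (HC1 : C ^ 2 <= 1) by (generalize (pow2_ge_0 S); lra).
    assert (HA : 0 <= 1 + s ^ 2 + 2 * s * C).
    { replace (1 + s ^ 2 + 2 * s * C) with ((s + C) ^ 2 + (1 - C ^ 2)) by ring.
      generalize (pow2_ge_0 (s + C)); lra. }
    set (A := 2 * s + (1 + s ^ 2) * C). set (B := (1 - s ^ 2) * S).
    assert (HAB : A ^ 2 + B ^ 2 = (1 + s ^ 2 + 2 * s * C) ^ 2).
    { unfold A, B. assert (HS2 : S ^ 2 = 1 - C ^ 2) by lra.
      replace (((1 - s ^ 2) * S) ^ 2) with ((1 - s ^ 2) ^ 2 * S ^ 2) by ring. rewrite HS2. ring. }
    assert (K : A * b1 + B * b2 <= 1 + s ^ 2 + 2 * s * C).
    { assert (H1 : (A * b1 + B * b2) ^ 2 <= (A ^ 2 + B ^ 2) * (b1 ^ 2 + b2 ^ 2)).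
      { assert (Eq : (A ^ 2 + B ^ 2) * (b1 ^ 2 + b2 ^ 2) - (A * b1 + B * b2) ^ 2 = (A * b2 - B * b1) ^ 2) by ring.
        generalize (pow2_ge_0 (A * b2 - B * b1)). lra. }
      assert (H2 : b1 ^ 2 + b2 ^ 2 <= 1) by lra.
      assert (H3 : 0 <= A ^ 2 + B ^ 2) by (generalize (pow2_ge_0 A) (pow2_ge_0 B); lra).
      assert (H4 : (A ^ 2 + B ^ 2) * (b1 ^ 2 + b2 ^ 2) <= (A ^ 2 + B ^ 2) * 1) by (apply Rmult_le_compat_l; auto).
      destruct (Rle_or_lt (A * b1 + B * b2) 0); [lra|].
      apply Rsqr_incr_0_var; [|lra]. unfold Rsqr.
      replace ((A * b1 + B * b2) * (A * b1 + B * b2)) with ((A * b1 + B * b2) ^ 2) by ring.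
      replace ((1 + s ^ 2 + 2 * s * C) * (1 + s ^ 2 + 2 * s * C)) with ((1 + s ^ 2 + 2 * s * C) ^ 2) by ring.
      lra. }
    unfold A, B, C, S in K. lra. }
  assert (INT : Int (fun t => 2 * s * a1 t + ((1 + s ^ 2) * co) * (a1 t * cos t) + ((1 + s ^ 2) * si) * (a1 t * sin t)
    + ((1 - s ^ 2) * co) * (a2 t * sin t) + (- ((1 - s ^ 2) * si)) * (a2 t * cos t)) <=
    Int (fun t => (1 + s ^ 2) + (2 * s * co) * cos t + (2 * s * si) * sin t)).
  { apply Int_le; [intro t; ctac | intro t; ctac | exact PW]. }
  rewrite Int_lin5 in INT; try (intro t; ctac).
  rewrite (Int_ext (fun t => 1 + s ^ 2 + 2 * s * co * cos t + 2 * s * si * sin t)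
             (fun t => (1 + s ^ 2) * 1 + (2 * s * co) * cos t + (2 * s * si) * sin t)) in INT by (intros; ring).
  rewrite !Int_plus, !Int_scal, Int_const, Int_cos, Int_sin in INT; try (intro t; ctac).
  rewrite I0, I1c, I1s, I2c, I2s, HXnu, HYnu in INT.
  assert (Hk : 0 < kk zx zy) by (unfold kk; lra).
  assert (Hpi := PI_RGT_0).
  assert (Key : r * kk zx zy * ((1 + s ^ 2) * (co * ex + si * ey) + (1 - s ^ 2) * (co ^ 2 + si ^ 2) * lam) <= 2 * (1 - s ^ 2)).
  { apply Rmult_le_reg_r with PI; auto. nra. }
  rewrite Hcoal, Hcs in Key. fold al.
  assert (P : 0 <= r * kk zx zy * (1 - s ^ 2) * (lam - al)).
  { apply Rmult_le_pos; [apply Rmult_le_pos; [apply Rmult_le_pos|]|]; lra. }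
  change (1 - zx ^ 2 - zy ^ 2) with (kk zx zy). lra.
Qed.

End PE.


Lemma CS2 a b c d : a * c + b * d <= sqrt (a ^ 2 + b ^ 2) * sqrt (c ^ 2 + d ^ 2).
Proof.
  rewrite <- sqrt_mult by nra.
  destruct (Rle_or_lt (a * c + b * d) 0) as [H|H].
  - apply Rle_trans with 0; auto. apply sqrt_pos.
  - rewrite <- (sqrt_pow2 (a * c + b * d)) by lra. apply sqrt_le_1_alt.
    assert (E : (a ^ 2 + b ^ 2) * (c ^ 2 + d ^ 2) - (a * c + b * d) ^ 2 = (a * d - b * c) ^ 2) by ring.
    generalize (pow2_ge_0 (a * d - b * c)). lra.
Qed.

Section Fin.
Variables (n : nat) (f : nat -> R -> R -> R).
Hypothesis Hh : harmonic_on_disc n f.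
Hypothesis Hc : forall x y, in_disc x y ->
    dotn n (fx f x y) (fx f x y) = dotn n (fy f x y) (fy f x y) /\
    dotn n (fx f x y) (fy f x y) = 0.
Hypothesis Hb : forall x y, in_disc x y -> in_ball n (fpt f x y).

Lemma s_lt1 zx zy e : in_disc zx zy -> dotn n e e = 1 -> (dotn n (fpt f zx zy) e) ^ 2 < 1.
Proof.
  intros Hz He. generalize (CS n (fpt f zx zy) e). rewrite He.
  generalize (dot_lt1 _ _ (Hb zx zy Hz)). lra.
Qed.

Lemma PE zx zy e ax ay : in_disc zx zy -> dotn n e e = 1 ->
  (1 - zx ^ 2 - zy ^ 2) * (ax * dotn n (fx f zx zy) e + ay * dotn n (fy f zx zy) e)
  <= sqrt (ax ^ 2 + ay ^ 2) * (1 - (dotn n (fpt f zx zy) e) ^ 2).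
Proof.
  intros Hz He.
  set (ex := dotn n (fx f zx zy) e). set (ey := dotn n (fy f zx zy) e).
  set (s := dotn n (fpt f zx zy) e).
  assert (Hs : s ^ 2 < 1) by (apply s_lt1; auto).
  assert (Hk : 0 < 1 - zx ^ 2 - zy ^ 2) by (unfold in_disc in Hz; lra).
  assert (Hsq : 0 <= sqrt (ax ^ 2 + ay ^ 2)) by apply sqrt_pos.
  destruct (Req_dec (ex ^ 2 + ey ^ 2) 0) as [E|E].
  - assert (ex = 0) by nra. assert (ey = 0) by nra.
    rewrite H, H0. replace (ax * 0 + ay * 0) with 0 by ring. rewrite Rmult_0_r.
    apply Rmult_le_pos; lra.
  - assert (Ha : 0 < ex ^ 2 + ey ^ 2) by (generalize (pow2_ge_0 ex) (pow2_ge_0 ey); lra).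
    set (al := sqrt (ex ^ 2 + ey ^ 2)).
    assert (Hal : 0 < al) by (apply sqrt_lt_R0; auto).
    assert (M : (1 - zx ^ 2 - zy ^ 2) * al <= 1 - s ^ 2).
    { destruct (Rle_or_lt ((1 - zx ^ 2 - zy ^ 2) * al) (1 - s ^ 2)) as [|Hlt]; auto. exfalso.
      set (K := (1 - zx ^ 2 - zy ^ 2) * al) in *.
      assert (HK : 0 < K) by (unfold K; apply Rmult_lt_0_compat; lra).
      set (r := (1 + (1 - s ^ 2) / K) / 2).
      assert (Hr1 : (1 - s ^ 2) / K < 1).
      { apply Rmult_lt_reg_r with K; auto. unfold Rdiv. rewrite Rmult_assoc, Rinv_l by lra. lra. }
      assert (Hr0 : 0 < (1 - s ^ 2) / K) by (apply Rdiv_lt_0_compat; lra).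
      generalize (main_ineq n f Hh Hc Hb zx zy e r Hz He ltac:(unfold r; lra) Ha).
      fold ex ey s al. intro M.
      assert (r * K > 1 - s ^ 2).
      { unfold r. replace ((1 + (1 - s ^ 2) / K) / 2 * K) with ((K + (1 - s ^ 2)) / 2) by (field; lra). lra. }
      unfold K in *. lra. }
    generalize (CS2 ax ay ex ey). fold al. intro C.
    apply Rle_trans with ((1 - zx ^ 2 - zy ^ 2) * (sqrt (ax ^ 2 + ay ^ 2) * al)).
    + apply Rmult_le_compat_l; lra.
    + replace ((1 - zx ^ 2 - zy ^ 2) * (sqrt (ax ^ 2 + ay ^ 2) * al)) with
        (sqrt (ax ^ 2 + ay ^ 2) * ((1 - zx ^ 2 - zy ^ 2) * al)) by ring.
      apply Rmult_le_compat_l; auto.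
Qed.

End Fin.

Lemma dot_scal n c u v : dotn n (fun i => c * u i) v = c * dotn n u v.
Proof. rewrite !dotn_sumL. rewrite <- sumL_scal. apply sumL_ext. intros; ring. Qed.

Lemma segment_disc ax ay t : in_disc ax ay -> 0 <= t <= 1 -> in_disc (t * ax) (t * ay).
Proof. unfold in_disc. intros H Ht. assert (t^2 <= 1) by nra. nra. Qed.

Theorem lemma3p1 (n : nat) (f : nat -> R -> R -> R) :
  (3 <= n)%nat ->
  conformal_minimal_immersion n f ->
  (forall x y, in_disc x y -> in_ball n (fpt f x y)) ->
  forall ax ay, in_disc ax ay ->
    normn n (fpt f ax ay) <=
      (sqrt (ax ^ 2 + ay ^ 2) + normn n (fpt f 0 0)) /
      (1 + sqrt (ax ^ 2 + ay ^ 2) * normn n (fpt f 0 0)).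
Proof.
  intros _ [Hh [_ Hc]] Hb ax ay Ha.
  set (r := sqrt (ax ^ 2 + ay ^ 2)).
  set (r0 := normn n (fpt f 0 0)).
  assert (H00 : in_disc 0 0) by (unfold in_disc; lra).
  assert (Hr0 : 0 <= r0) by apply sqrt_pos.
  assert (Hr01 : r0 < 1) by (apply Hb; auto).
  assert (Hr : 0 <= r) by apply sqrt_pos.
  assert (Hr1 : r < 1).
  { unfold r. rewrite <- sqrt_1. apply sqrt_lt_1_alt. unfold in_disc in Ha.
    split; [nra|lra]. }
  assert (Hr2 : r * r = ax ^ 2 + ay ^ 2) by (apply sqrt_sqrt; nra).
  assert (Hden : 0 < 1 + r * r0) by nra.
  set (u := fpt f ax ay).
  destruct (Req_dec (dotn n u u) 0) as [U0|U0].
  - unfold normn. fold u. rewrite U0, sqrt_0.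
    apply Rdiv_le_0_compat; lra.
  - assert (Hu : 0 < dotn n u u) by (generalize (dot_nonneg n u); lra).
    set (m := sqrt (dotn n u u)).
    assert (Hm : 0 < m) by (apply sqrt_lt_R0; auto).
    assert (Hm2 : m * m = dotn n u u) by (apply sqrt_sqrt; lra).
    assert (Hm1 : m < 1) by (apply Hb; auto).
    set (e := fun i => / m * u i).
    assert (He : dotn n e e = 1).
    { unfold e. rewrite dot_scal, dot_comm, dot_scal. rewrite <- Hm2. field. lra. }
    assert (Hue : dotn n u e = m).
    { unfold e. rewrite dot_comm, dot_scal. rewrite <- Hm2. field. lra. }
    set (h := fun t => lin (seq 0 n) f e (t * ax) (t * ay)).
    set (dh := fun t => ax * dotn n (fx f (t * ax) (t * ay)) e + ay * dotn n (fy f (t * ax) (t * ay)) e).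
    assert (Hhd : forall t, 0 <= t <= 1 -> is_derive h t (dh t)).
    { intros t Ht. apply is_derive_Reals.
      unfold h.
      replace (dh t) with (dotn n (fx f (t * ax) (t * ay)) e * ax + dotn n (fy f (t * ax) (t * ay)) e * ay) by (unfold dh; ring).
      apply (derivable_pt_lim_comp_2d (lin (seq 0 n) f e) (fun t => t * ax) (fun t => t * ay)).
      - destruct (nice_G n f Hh e (t * ax) (t * ay) (segment_disc ax ay t Ha Ht)) as [D _]. exact D.
      - apply is_derive_Reals. auto_derive; auto; ring.
      - apply is_derive_Reals. auto_derive; auto; ring. }
    assert (Hh1 : forall t, 0 <= t <= 1 -> (h t) ^ 2 < 1).
    { intros t Ht. apply s_lt1; auto. apply segment_disc; auto. }
    assert (Hdh : forall t, 0 <= t <= 1 -> (1 - t ^ 2 * (r * r)) * dh t <= r * (1 - (h t) ^ 2)).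
    { intros t Ht. generalize (PE n f Hh Hc Hb (t * ax) (t * ay) e ax ay (segment_disc ax ay t Ha Ht) He).
      fold r. rewrite Hr2. unfold dh, h. intro P.
      replace (1 - t ^ 2 * (ax ^ 2 + ay ^ 2)) with (1 - (t * ax) ^ 2 - (t * ay) ^ 2) by ring. exact P. }
    set (Q := fun t => (1 + h t) / (1 - h t) * ((1 - t * r) / (1 + t * r))).
    set (dQ := fun t => 2 / ((1 - h t) ^ 2 * (1 + t * r) ^ 2) * ((1 - t ^ 2 * (r * r)) * dh t - r * (1 - (h t) ^ 2))).
    assert (HQd : forall t, 0 <= t <= 1 -> is_derive Q t (dQ t)).
    { intros t Ht. generalize (Hh1 t Ht). intro H1.
      assert (Hlt : h t < 1) by nra.
      assert (Hgt : 1 + t * r > 0) by nra.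
      unfold Q. eapply isd_eq.
      - apply (isd_mult (fun t => (1 + h t) / (1 - h t)) (fun t => (1 - t * r) / (1 + t * r))).
        + apply (is_derive_div (fun t => 1 + h t) (fun t => 1 - h t)).
          * apply (is_derive_plus (fun _ => 1) h). apply is_derive_const. apply Hhd; auto.
          * apply (is_derive_minus (fun _ => 1) h). apply is_derive_const. apply Hhd; auto.
          * lra.
        + auto_derive; [lra | reflexivity].
      - unfold dQ. unfold minus, plus, opp, zero, mult; simpl. unfold plus; simpl. match goal with |- @eq _ ?a ?b => change (@eq R a b) end. field. split; lra. }
    assert (HdQ : forall t, 0 <= t <= 1 -> dQ t <= 0).
    { intros t Ht. generalize (Hh1 t Ht) (Hdh t Ht). intros H1 H2.
      assert (Hlt : h t < 1) by nra. assert (Hgt : 1 + t * r > 0) by nra.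
      unfold dQ. apply Rmult_le_0_l; [|lra].
      apply Rlt_le, Rdiv_lt_0_compat; [lra|]. apply Rmult_lt_0_compat; apply pow_lt; lra. }
    destruct (MVT_gen Q 0 1 dQ) as [c [Hc1 Hc2]].
    { intros x Hx. rewrite Rmin_left, Rmax_right in Hx by lra. apply HQd; lra. }
    { intros x Hx. rewrite Rmin_left, Rmax_right in Hx by lra. eapply deriv_cont. apply HQd; lra. }
    rewrite Rmin_left, Rmax_right in Hc1 by lra.
    assert (HQ : Q 1 <= Q 0) by (generalize (HdQ c Hc1); nra).
    assert (Eh1 : h 1 = m).
    { unfold h. rewrite !Rmult_1_l. rewrite <- Hue. reflexivity. }
    set (h0 := h 0).
    assert (Eh0 : h0 = dotn n (fpt f 0 0) e).
    { unfold h0, h. rewrite !Rmult_0_l. reflexivity. }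
    assert (Hh0 : h0 <= r0).
    { rewrite Eh0. generalize (CS n (fpt f 0 0) e). rewrite He, Rmult_1_r. intro C.
      unfold r0, normn. destruct (Rle_or_lt (dotn n (fpt f 0 0) e) 0).
      - apply Rle_trans with 0; [lra | apply sqrt_pos].
      - rewrite <- (sqrt_pow2 (dotn n (fpt f 0 0) e)) by lra. apply sqrt_le_1_alt. exact C. }
    assert (Hh01 : h0 ^ 2 < 1) by (apply Hh1; lra).
    assert (Hh0lt : h0 < 1) by nra. assert (Hh0gt : -1 < h0) by nra.
    unfold Q in HQ. rewrite Eh1 in HQ. fold h0 in HQ.
    rewrite Rmult_0_l, Rminus_0_r, Rplus_0_r, Rmult_1_l in HQ.
    replace ((1 - 0 * r) / (1 + 0 * r)) with 1 in HQ by (field).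
    assert (Key : (1 + m) * (1 - r) * (1 - h0) <= (1 + h0) * (1 - m) * (1 + r)).
    { assert (Hp : 0 <= (1 - m) * (1 + r) * (1 - h0)) by (repeat apply Rmult_le_pos; lra).
      apply (Rmult_le_compat_r _ _ _ Hp) in HQ.
      replace ((1 + m) / (1 - m) * ((1 - r) / (1 + r)) * ((1 - m) * (1 + r) * (1 - h0))) with ((1 + m) * (1 - r) * (1 - h0)) in HQ by (field; lra).
      replace ((1 + h0) / (1 - h0) * (1 / 1) * ((1 - m) * (1 + r) * (1 - h0))) with ((1 + h0) * (1 - m) * (1 + r)) in HQ by (field; lra).
      exact HQ. }
    assert (K2 : m * (1 + r * h0) <= r + h0) by nra.
    assert (K3 : m * (1 + r * r0) <= r + r0).
    { assert (m * r * (r0 - h0) <= r0 - h0).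
      { apply Rle_trans with (1 * (r0 - h0)); [|lra]. apply Rmult_le_compat_r; [lra|]. nra. }
      nra. }
    unfold normn. fold u. fold m.
    apply Rmult_le_reg_r with (1 + r * r0); auto.
    unfold Rdiv. rewrite Rmult_assoc, Rinv_l by lra. lra.
Qed.
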